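(* Let $G$ be a finite simple graph, and suppose $w_1(u)=c$ for all $u\in V(G)$, where $c$ is a fixed real number. Then for any edge weight function $w$, the multiplicity of $c$ as a root of $\eta_{(w,w_1)}(G,x)$ equals $\mathrm{def}(G)$, the number of vertices left uncovered by a maximum matching of $G$.
   Context: An edge weight function $w$ assigns a nonzero complex number to each edge; induced subgraphs carry restricted weights. For $A\subseteq E(G)$, $w(A)=\prod_{e\in A}w(e)$. $\mu_w(G,x)=\sum_{M}(-1)^{|M|}|w(M)|^2x^{n-2|M|}$ over all matchings $M$ of $G$ (including empty), $n=|V(G)|$. $\eta_{(w,w_1)}(G,x)=\sum_{S\subseteq V(G)}(-1)^{|V(G)\setminus S|}\big(\prod_{y\in V(G)\setminus S}w_1(y)\big)\mu_w(G[S],x)$ with $G[S]$ the induced subgraph and $\mu_w$ of the empty graph equal to $1$. *)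

(* Defs.v *)
From HB Require Import structures.
From mathcomp Require Import all_boot all_order all_algebra.
From mathcomp Require Import complex.
From mathcomp Require Import reals.
Set Implicit Arguments. Unset Strict Implicit. Unset Printing Implicit Defensive.
Import Order.TTheory GRing.Theory Num.Theory.
Local Open Scope ring_scope.

(* A finite simple graph on vertex type T: e symmetric and irreflexive.
   Edges are the 2-element vertex sets {x,y} with e x y. *)
Definition edges (T : finType) (e : rel T) : {set {set T}} :=
  [set A : {set T} | [exists x : T, exists y : T, e x y && (A == [set x; y])]].

Definition is_matching (T : finType) (e : rel T) (M : {set {set T}}) : bool :=
  (M \subset edges e) &&
  [forall A in M, forall B in M, (A != B) ==> [disjoint A & B]].

(* Matchings of the induced subgraph G[S]: matchings of G all of whose edges lie in S. *)
Definition matchings_in (T : finType) (e : rel T) (S : {set T}) : {set {set {set T}}} :=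
  [set M | is_matching e M & [forall A in M, A \subset S]].

Definition mu_w (R : realType) (T : finType) (e : rel T) (w : {set T} -> R[i])
    (S : {set T}) : {poly R[i]} :=
  \sum_(M in matchings_in e S)
     ((-1) ^+ #|M| * `|\prod_(A in M) w A| ^+ 2) *: 'X^(#|S| - 2 * #|M|).

Definition eta_w (R : realType) (T : finType) (e : rel T) (w : {set T} -> R[i])
    (w1 : T -> R[i]) : {poly R[i]} :=
  \sum_(S : {set T})
     ((-1) ^+ #|~: S| * \prod_(y in ~: S) w1 y) *: mu_w e w S.

Definition matching_number (T : finType) (e : rel T) : nat :=
  \max_(M : {set {set T}} | is_matching e M) #|M|.

Definition deficiency (T : finType) (e : rel T) : nat :=
  (#|T| - 2 * matching_number e)%N.

(* Main.v *)
Require Import Defs.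
From HB Require Import structures.
From mathcomp Require Import all_boot all_order all_algebra.
From mathcomp Require Import complex.
From mathcomp Require Import reals.
From mathcomp Require Import zify.
Import Order.TTheory GRing.Theory Num.Theory.
Local Open Scope ring_scope.

Lemma card_edge (T : finType) (e : rel T) (e_irr : irreflexive e) A :
  A \in edges e -> #|A| = 2%N.
Proof.
rewrite inE => /existsP [x /existsP [y /andP [exy /eqP ->]]].
rewrite cards2; have -> // : x != y.
by apply: contraTneq exy => ->; rewrite e_irr.
Qed.

Lemma card_cover_matching (T : finType) (e : rel T) (e_irr : irreflexive e) M :
  is_matching e M -> #|cover M| = (2 * #|M|)%N.
Proof.
move=> /andP [sub /forallP dis].
have triv : trivIset M.
  apply/trivIsetP => A B AM BM AB.
  have := dis A; rewrite AM /= => /forallP /(_ B); rewrite BM AB //.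
move: triv; rewrite /trivIset => /eqP <-.
rewrite (eq_bigr (fun _ => 2%N)); first by rewrite sum_nat_const mulnC.
by move=> A AM; apply: (@card_edge _ _ e_irr); apply: (subsetP sub).
Qed.

Lemma inner_sum (K : comNzRingType) (T : finType) (C : {set T}) (x : K) :
  \sum_(S : {set T} | C \subset S)
     ((-1) ^+ #|~: S| * x ^+ #|~: S|) *: 'X^(#|S| - #|C|)
  = ('X - x%:P) ^+ #|~: C|.
Proof.
pose F (i : T) : {poly K} := if i \in C then 1 else 'X.
pose G (i : T) : {poly K} := if i \in C then 0 else - x%:P.
have H := @bigA_distr _ 0 1 *%R +%R T F G.
have -> : ('X - x%:P) ^+ #|~: C| = \prod_i (F i + G i).
  rewrite -prodr_const big_mkcond /=; apply: eq_bigr => i _.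
  by rewrite /F /G inE; case: (i \in C); rewrite ?addr0.
rewrite H big_mkcond /=; apply: eq_bigr => J _.
case: (boolP (C \subset J)) => CJ.
  rewrite (eq_bigr (fun i => (if i \in J :\: C then 'X else 1) *
                             (if i \in ~: J then - x%:P else 1))); last first.
    move=> i _; rewrite /F /G !inE.
    case iJ: (i \in J); case iC: (i \in C) => /=; rewrite ?mulr1 ?mul1r //.
    by move: (subsetP CJ i); rewrite iC iJ => /(_ isT).
  rewrite big_split /= -!big_mkcond /= !prodr_const.
  rewrite cardsD (setIidPr CJ) -mul_polyC mulrC; congr (_ * _).
  rewrite polyCM !rmorphXn -exprMn rmorphN1 mulN1r. by [].
have [i iC iJ] := subsetPn CJ.
by rewrite (bigD1 i) //= (negbTE iJ) /G iC mul0r.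
Qed.
Lemma eta_expand (R : realType) (T : finType) (e : rel T)
  (e_irr : irreflexive e) (w : {set T} -> R[i]) (w1 : T -> R[i]) (c : R[i])
  (hw1 : forall u, w1 u = c) :
  eta_w e w w1 = \sum_(M | is_matching e M)
     ((-1) ^+ #|M| * `|\prod_(A in M) w A| ^+ 2) *: ('X - c%:P) ^+ (#|T| - 2 * #|M|).
Proof.
rewrite /eta_w /mu_w.
under eq_bigr => S _ do rewrite scaler_sumr.
rewrite (eq_bigr (fun S : {set T} => \sum_(M : {set {set T}} | is_matching e M && (cover M \subset S))
   ((-1) ^+ #|M| * `|\prod_(A in M) w A| ^+ 2) *:
     (((-1) ^+ #|~: S| * c ^+ #|~: S|) *: 'X^(#|S| - #|cover M|)))); last first.
  move=> S _; apply: eq_big.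
    move=> M; rewrite inE; congr (_ && _).
    apply/forallP/bigcupsP => [h A AM| h A]; first by have := h A; rewrite AM.
    by apply/implyP => /h.
  move=> M; rewrite inE => /andP [mM _].
  rewrite !scalerA (@card_cover_matching _ _ e_irr _ mM) mulrC.
  congr (_ *: _); congr (_ * _).
  by rewrite (eq_bigr (fun _ => c)) ?prodr_const.
rewrite (exchange_big_dep (is_matching e)) /=; last by move=> S M _ /andP [].
apply: eq_bigr => M mM.
rewrite (eq_bigl (fun S : {set T} => cover M \subset S)); last by move=> S; rewrite mM.
rewrite -scaler_sumr inner_sum; congr (_ *: _); congr (_ ^+ _).
by rewrite cardsCs setCK (@card_cover_matching _ _ e_irr _ mM).
Qed.
Theorem lemma6p6 (R : realType) (T : finType) (e : rel T)
  (e_sym : symmetric e) (e_irr : irreflexive e)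
  (w : {set T} -> R[i]) (w_nz : forall A, A \in edges e -> w A != 0)
  (w1 : T -> R[i]) (c : R) (hw1 : forall u, w1 u = (c%:C)%C) :
  mup (c%:C)%C (eta_w e w w1) = deficiency e.
Proof.
rewrite (@eta_expand _ _ _ e_irr _ _ _ hw1) /deficiency.
set nu := matching_number e.
set a := fun M : {set {set T}} => (-1) ^+ #|M| * `|\prod_(A in M) w A| ^+ 2 : R[i].
have m0 : is_matching e set0.
  by rewrite /is_matching sub0set; apply/forallP => A; rewrite inE.
have [M0 mM0 hM0] : {M0 | M0 \in [pred M | is_matching e M] & nu = #|M0|}.
  rewrite /nu /matching_number.
  have ne : (0 < #|[pred M : {set {set T}} | is_matching e M]|)%N.
    by apply/card_gt0P; exists set0.
  have [M0 hM0 eq0] := @eq_bigmax_cond _ [pred M | is_matching e M] (fun M => #|M|) ne.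
  by exists M0.
rewrite inE /= in mM0.
have Mle : forall M, is_matching e M -> (#|M| <= nu)%N.
  by move=> M mM; apply: (@leq_bigmax_cond _ (is_matching e) (fun M => #|M|)).
have h2 : (2 * nu <= #|T|)%N.
  by rewrite hM0 -(@card_cover_matching _ _ e_irr _ mM0) max_card.
pose q := \sum_(M | is_matching e M) a M *: ('X - (c%:C)%C%:P) ^+ (2 * (nu - #|M|)).
have -> : \sum_(M | is_matching e M) a M *: ('X - (c%:C)%C%:P) ^+ (#|T| - 2 * #|M|)
        = ('X - (c%:C)%C%:P) ^+ (#|T| - 2 * nu) * q.
  rewrite mulr_sumr; apply: eq_bigr => M mM.
  rewrite -scalerAr -exprD; congr (_ *: _ ^+ _).
  have := Mle M mM; lia.
rewrite mupMl ?mup_XsubCX ?eqxx // /root.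
have -> : q.[(c%:C)%C] = (-1) ^+ nu * \sum_(M | is_matching e M)
      (if #|M| == nu then `|\prod_(A in M) w A| ^+ 2 else 0).
  rewrite /q horner_sum mulr_sumr; apply: eq_bigr => M mM.
  rewrite hornerZ horner_exp hornerXsubC subrr expr0n /a.
  have := Mle M mM.
  have [eqM | ne] := eqVneq #|M| nu => le.
    by rewrite eqM subnn muln0 eqxx mulr1.
  have -> : (2 * (nu - #|M|) == 0)%N = false by lia.
  by rewrite mulr0 mulr0.
rewrite mulf_eq0 negb_or signr_eq0 /=.
rewrite psumr_neq0; last by move=> M _; case: ifP => // _; rewrite exprn_ge0.
apply/hasP; exists M0; first by rewrite mem_index_enum.
rewrite mM0 -hM0 eqxx /= exprn_gt0 // normr_gt0.
apply/prodf_neq0 => A AM; apply: w_nz.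
by move: mM0 => /andP [/subsetP sub _]; apply: sub.
Qed.
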